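(* Let $\alpha \in \mathbb{R}$ be such that $\alpha/(2\pi)$ is an algebraic irrational number. For $\phi \in \mathbb{R}$ and $\epsilon>0$ define the gate complexity of $e^{i\phi}\in U(1)$ with respect to the single gate $e^{i\alpha}$ by $$C_\epsilon(\phi) = \min\{|n| : n \in \mathbb{Z},\ |e^{i\phi}-e^{in\alpha}|<\epsilon\}.$$ Then for every $\phi \in [0,2\pi)$ and every $\delta>0$ there exists $\phi'$ with $|\phi'-\phi|<\delta$ such that $$\log C_\epsilon(\phi') > \frac{1}{3}\log\left(\frac{1}{\epsilon}\right) + \mathcal{O}(\epsilon^0) \quad \text{as } \epsilon \to 0,$$ i.e. there is a constant $c$ (depending on $\alpha$ and $\phi'$) such that $\log C_\epsilon(\phi') > \frac13 \log(1/\epsilon) + c$ for all sufficiently small $\epsilon>0$.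
   Context: Since $\alpha/\pi$ is irrational, the set $\{e^{in\alpha}: n\in\mathbb{Z}\}$ is dense in $U(1)$, so $C_\epsilon(\phi)$ is finite for every $\epsilon>0$. *)

(* Defs.v *)
From Stdlib Require Import Reals ZArith.
Open Scope R_scope.

Definition is_algebraic (x : R) : Prop :=
  exists (n : nat) (a : nat -> Z),
    a n <> 0%Z /\ sum_f_R0 (fun i => IZR (a i) * x ^ i) n = 0.

Definition is_irrational (x : R) : Prop :=
  ~ exists (p q : Z), q <> 0%Z /\ x = IZR p / IZR q.

(* |e^{i a} - e^{i b}| written via real and imaginary parts. *)
Definition unit_dist (a b : R) : R :=
  sqrt ((cos a - cos b) ^ 2 + (sin a - sin b) ^ 2).

Definition is_gate_complexity (alpha eps phi : R) (k : nat) : Prop :=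
  (exists n : Z, Z.abs_nat n = k /\ unit_dist phi (IZR n * alpha) < eps) /\
  (forall n : Z, unit_dist phi (IZR n * alpha) < eps -> (k <= Z.abs_nat n)%nat).

(* Main.v *)
Require Import Defs.
From Stdlib Require Import Reals ZArith Lra Lia Classical List Wf_nat.
Open Scope R_scope.

Lemma unit_dist_eq a b : unit_dist a b = sqrt (2 - 2 * cos (a - b)).
Proof.
  unfold unit_dist. f_equal. rewrite cos_minus.
  pose proof (sin2_cos2 a). pose proof (sin2_cos2 b). unfold Rsqr in *. nra.
Qed.

Lemma cos_shiftZ y (j : Z) : cos (y + 2 * IZR j * PI) = cos y.
Proof.
  destruct j as [|p|p].
  - simpl. f_equal. ring.
  - replace (IZR (Z.pos p)) with (INR (Pos.to_nat p)).
    + apply cos_period.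
    + rewrite INR_IZR_INZ, positive_nat_Z. reflexivity.
  - rewrite <- (cos_period (y + 2 * IZR (Z.neg p) * PI) (Pos.to_nat p)).
    f_equal. rewrite INR_IZR_INZ, positive_nat_Z.
    change (Z.neg p) with (- Z.pos p)%Z. rewrite opp_IZR. ring.
Qed.

Lemma cos_lb2 d : -2 <= d <= 2 -> 1 - d^2/2 <= cos d.
Proof.
  intro H.
  destruct (pre_cos_bound d 0) as [H1 _]; try lra.
  unfold cos_approx, cos_term in H1. simpl in H1. lra.
Qed.

Lemma cos_ub4 d : -2 <= d <= 2 -> cos d <= 1 - d^2/2 + d^4/24.
Proof.
  intro H.
  destruct (pre_cos_bound d 0) as [_ H1]; try lra.
  unfold cos_approx, cos_term in H1. simpl in H1. lra.
Qed.

Lemma PI_gt3 : 3 < PI.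
Proof. pose proof PI2_3_2. lra. Qed.

Lemma ud_upper a b : -2 <= a - b <= 2 -> unit_dist a b <= Rabs (a - b).
Proof.
  intro H. rewrite unit_dist_eq. rewrite <- sqrt_Rsqr_abs.
  apply sqrt_le_1_alt. pose proof (cos_lb2 (a - b) H). unfold Rsqr. nra.
Qed.

Lemma ud_shift a b j : unit_dist a (b + 2 * IZR j * PI) = unit_dist a b.
Proof.
  rewrite !unit_dist_eq. f_equal. f_equal. f_equal.
  replace (a - (b + 2 * IZR j * PI)) with ((a - b) + 2 * IZR (- j) * PI).
  - apply cos_shiftZ.
  - rewrite opp_IZR. ring.
Qed.

Lemma ud_lower d rho : 0 < rho <= 1/16 ->
  (forall j : Z, Rabs (d - 2 * IZR j * PI) >= 2 * PI * rho) ->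
  rho ^ 2 <= 2 - 2 * cos d.
Proof.
  intros Hr Hj. pose proof PI_gt3 as HP. pose proof PI_4 as HP4.
  set (j0 := Int_part (d / (2 * PI) + 1/2)).
  destruct (base_Int_part (d / (2 * PI) + 1/2)) as [B1 B2]. fold j0 in B1, B2.
  set (d' := d - 2 * IZR j0 * PI).
  assert (Hd : d / (2*PI) * (2 * PI) = d) by (field; lra).
  assert (R1 : - PI <= d' < PI).
  { assert (M1 : 2*PI*IZR j0 <= 2*PI*(d/(2*PI)+1/2)) by (apply Rmult_le_compat_l; lra).
    assert (M2 : 2*PI*(d/(2*PI)+1/2) < 2*PI*(IZR j0 + 1)) by (apply Rmult_lt_compat_l; lra).
    assert (E : 2*PI*(d/(2*PI)+1/2) = d + PI) by (field; lra).
    rewrite E in M1, M2. unfold d'. split; lra. }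
  assert (Hc : cos d = cos d').
  { rewrite <- (cos_shiftZ d' j0). f_equal. unfold d'. ring. }
  specialize (Hj j0). fold d' in Hj.
  set (y := Rabs d').
  assert (Hcy : cos d' = cos y).
  { unfold y, Rabs. destruct (Rcase_abs d'). - rewrite cos_neg; auto. - auto. }
  assert (Ry : 2 * PI * rho <= y <= PI).
  { unfold y, Rabs in *. destruct (Rcase_abs d'); lra. }
  set (y0 := 2 * PI * rho) in *.
  assert (Hy0 : 0 < y0 <= 1/2) by (unfold y0; split; nra).
  assert (C1 : cos y <= cos y0).
  { destruct (Req_dec y y0) as [E|E].
    - rewrite E; lra.
    - left. apply cos_decreasing_1; lra. }
  assert (C2 : cos y0 <= 1 - y0^2/2 + y0^4/24) by (apply cos_ub4; lra).
  assert (C3a : 0 <= y0^2 <= 1/4) by (split; nra).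
  assert (C3 : y0^4/24 <= y0^2/4).
  { replace (y0^4) with (y0^2*y0^2) by ring. nra. }
  rewrite Hc, Hcy.
  assert (Ey : y0^2 = 4 * PI^2 * rho^2) by (unfold y0; ring).
  assert (P9 : PI^2 >= 9) by nra.
  assert (2 * PI^2 * rho^2 >= rho^2).
  { assert (0 <= rho^2) by nra. nra. }
  lra.
Qed.

Definition Gs (x z : R) := exists n j : Z, z = IZR n * x + IZR j.

Lemma Gs_sub x a b : Gs x a -> Gs x b -> Gs x (a - b).
Proof.
  intros [n1 [j1 ->]] [n2 [j2 ->]]. exists (n1 - n2)%Z, (j1 - j2)%Z.
  rewrite !minus_IZR. ring.
Qed.

Lemma Gs_mulZ x a m : Gs x a -> Gs x (IZR m * a).
Proof.
  intros [n1 [j1 ->]]. exists (m * n1)%Z, (m * j1)%Z. rewrite !mult_IZR. ring.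
Qed.

Lemma Int_part_bounds r : IZR (Int_part r) <= r < IZR (Int_part r) + 1.
Proof. destruct (base_Int_part r). lra. Qed.

Lemma quot_rem g z : 0 < g -> exists q : Z, 0 <= z - IZR q * g < g.
Proof.
  intro Hg. exists (Int_part (z / g)).
  destruct (Int_part_bounds (z / g)) as [H1 H2].
  set (q := IZR (Int_part (z / g))) in *.
  assert (E : z / g * g = z) by (field; lra).
  assert (q * g <= z / g * g) by (apply Rmult_le_compat_r; lra).
  assert (z / g * g < (q + 1) * g) by (apply Rmult_lt_compat_r; lra).
  lra.
Qed.

Lemma small_elem x : is_irrational x -> forall e, 0 < e -> exists z, Gs x z /\ 0 < z < e.
Proof.
  intros Hirr e He. apply NNPP; intro Hno.
  assert (Hlow : forall z, Gs x z -> 0 < z -> e <= z).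
  { intros z Gz Hz. destruct (Rlt_le_dec z e) as [H|H]; auto.
    exfalso; apply Hno; exists z; auto. }
  set (U := fun u => exists g, Gs x g /\ 0 < g /\ u = - g).
  assert (Hb : bound U).
  { exists (- e). intros u [g [Gg [Hg ->]]]. specialize (Hlow g Gg Hg). lra. }
  assert (Hex : exists u, U u).
  { exists (-1). exists 1. split; [|lra]. exists 0%Z, 1%Z. simpl. ring. }
  destruct (completeness U Hb Hex) as [m [Hub Hlub]].
  set (g := - m).
  assert (Inf1 : forall z, Gs x z -> 0 < z -> g <= z).
  { intros z Gz Hz. assert (U (- z)) by (exists z; auto). specialize (Hub _ H). unfold g. lra. }
  assert (Inf2 : forall eps, 0 < eps -> exists z, Gs x z /\ 0 < z /\ z < g + eps).
  { intros eps Heps. apply NNPP; intro Hn.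
    assert (is_upper_bound U (m - eps)).
    { intros u [z [Gz [Hz ->]]]. destruct (Rlt_le_dec z (g + eps)) as [H|H].
      - exfalso; apply Hn; exists z; auto.
      - unfold g in H. lra. }
    specialize (Hlub _ H). lra. }
  assert (Hge : e <= g).
  { assert (is_upper_bound U (- e)).
    { intros u [z [Gz [Hz ->]]]. specialize (Hlow z Gz Hz). lra. }
    specialize (Hlub _ H). unfold g. lra. }
  assert (Gg : Gs x g).
  { destruct (Inf2 (g / 2)) as [z1 [G1 [P1 L1]]]; [lra|].
    assert (g <= z1) by (apply Inf1; auto).
    destruct (Req_dec z1 g) as [E|E]; [rewrite <- E; auto|].
    destruct (Inf2 (z1 - g)) as [z2 [G2 [P2 L2]]]; [lra|].
    assert (g <= z2) by (apply Inf1; auto).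
    assert (g <= z1 - z2) by (apply Inf1; [apply Gs_sub; auto | lra]).
    lra. }
  assert (Hmul : forall z, Gs x z -> exists q : Z, z = IZR q * g).
  { intros z Gz. destruct (quot_rem g z) as [q Hq]; [lra|]. exists q.
    destruct (Req_dec (z - IZR q * g) 0) as [E|E]; [lra|].
    assert (g <= z - IZR q * g).
    { apply Inf1; [apply Gs_sub; [auto| apply Gs_mulZ; auto] | lra]. }
    lra. }
  destruct (Hmul 1) as [q1 E1]. { exists 0%Z, 1%Z. simpl. ring. }
  destruct (Hmul x) as [q2 E2]. { exists 1%Z, 0%Z. simpl. ring. }
  apply Hirr. exists q2, q1. split.
  - intro Hq. rewrite Hq in E1. simpl in E1. lra.
  - assert (IZR q1 <> 0) by (intro Hq; rewrite Hq in E1; lra).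
    rewrite E2. assert (g = 1 / IZR q1) by (rewrite E1; field; auto).
    rewrite H0. field. auto.
Qed.

Lemma density x : is_irrational x -> forall t e, 0 < e ->
  exists n j : Z, Rabs (t - IZR n * x - IZR j) < e.
Proof.
  intros Hirr t e He. destruct (small_elem x Hirr e He) as [d [Gd Hd]].
  destruct (quot_rem d t) as [m Hm]; [lra|].
  destruct (Gs_mulZ x d m Gd) as [n [j E]]. exists n, j.
  rewrite Rabs_pos_eq; lra.
Qed.


Fixpoint sumr (l : list (R*R)) : R :=
  match l with nil => 0 | p :: l' => 2 * snd p + sumr l' end.

Lemma sumr_app l1 l2 : sumr (l1 ++ l2) = sumr l1 + sumr l2.
Proof. induction l1; simpl; [ring | rewrite IHl1; ring]. Qed.

Lemma sumr_nonneg l : (forall p, In p l -> 0 <= snd p) -> 0 <= sumr l.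
Proof.
  induction l; simpl; intros H; [lra|].
  assert (0 <= snd a) by (apply H; auto).
  assert (0 <= sumr l) by (apply IHl; intros; apply H; auto). lra.
Qed.

Lemma cover_len : forall n (l : list (R*R)), (length l <= n)%nat -> forall a b, a <= b ->
  (forall p, In p l -> 0 <= snd p) ->
  (forall y, a <= y <= b -> exists p, In p l /\ Rabs (y - fst p) < snd p) ->
  b - a <= sumr l.
Proof.
  induction n as [|n IH]; intros l Hlen a b Hab Hpos Hcov.
  - destruct l; [|simpl in Hlen; lia].
    destruct (Hcov a) as [p [[] _]]. lra.
  - destruct (Hcov a) as [p [Hp Ha]]; [lra|].
    destruct (in_split p l Hp) as [l1 [l2 E]]. subst l.
    rewrite sumr_app. simpl.
    assert (P1 : 0 <= sumr l1) by (apply sumr_nonneg; intros; apply Hpos; apply in_or_app; auto).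
    assert (P2 : 0 <= sumr l2) by (apply sumr_nonneg; intros; apply Hpos; apply in_or_app; simpl; auto).
    assert (Hpp : 0 <= snd p) by (apply Hpos; apply in_or_app; simpl; auto).
    apply Rabs_def2 in Ha. destruct Ha as [Ha1 Ha2].
    destruct (Rlt_le_dec b (fst p + snd p)) as [Hb|Hb].
    + lra.
    + assert (IHa : b - (fst p + snd p) <= sumr (l1 ++ l2)).
      { apply IH.
        - rewrite length_app in *. simpl in Hlen. lia.
        - auto.
        - intros q Hq. apply Hpos. apply in_app_or in Hq. apply in_or_app. simpl. tauto.
        - intros y Hy. destruct (Hcov y) as [q [Hq Hyq]]; [lra|].
          exists q. split; auto.
          apply in_app_or in Hq. apply in_or_app. destruct Hq as [Hq|[Hq|Hq]]; auto.
          subst q. apply Rabs_def2 in Hyq. lra. }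
      rewrite sumr_app in IHa. lra.
Qed.

Definition rN (c : R) (m : nat) : R := c / ((INR m + 1) * (INR m + 2)).
Definition ctr (x s : R) (n : Z) : R := IZR n * x - IZR (Int_part (IZR n * x - s)).

Fixpoint balls x s c (N : nat) : list (R*R) :=
  match N with
  | O => (ctr x s 0, rN c 0) :: nil
  | S M => (ctr x s (Z.of_nat (S M)), rN c (S M)) :: (ctr x s (- Z.of_nat (S M)), rN c (S M))
            :: balls x s c M
  end.

Lemma balls_sum x s c N : sumr (balls x s c N) = 3 * c - 4 * c / (INR N + 2).
Proof.
  induction N as [|M IH].
  - simpl. unfold rN. simpl. field.
  - change (sumr (balls x s c (S M))) with
      (2 * rN c (S M) + (2 * rN c (S M) + sumr (balls x s c M))).
    rewrite IH. unfold rN. rewrite S_INR.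
    assert (0 <= INR M) by apply pos_INR.
    field. split; lra.
Qed.

Lemma balls_in x s c N n : (Z.abs_nat n <= N)%nat ->
  In (ctr x s n, rN c (Z.abs_nat n)) (balls x s c N).
Proof.
  induction N as [|M IH]; intro H.
  - assert (n = 0%Z) by lia. subst. simpl. auto.
  - destruct (Nat.eq_dec (Z.abs_nat n) (S M)) as [E|E].
    + rewrite E. simpl.
      destruct (Z_le_gt_dec 0 n).
      * left. f_equal. f_equal. lia.
      * right. left. f_equal. f_equal. lia.
    + simpl. right. right. apply IH. lia.
Qed.

Lemma rN_le c m : 0 <= c -> rN c m <= c / 2.
Proof.
  intro Hc. unfold rN, Rdiv. apply Rmult_le_compat_l; auto.
  assert (0 <= INR m) by apply pos_INR.
  apply Rinv_le_contravar; nra.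
Qed.

Lemma rN_pos c m : 0 < c -> 0 < rN c m.
Proof.
  intro Hc. unfold rN. assert (0 <= INR m) by apply pos_INR.
  apply Rdiv_lt_0_compat; nra.
Qed.

Lemma list_bound (l : list R) : exists N : nat, forall y, In y l -> y <= INR N.
Proof.
  induction l as [|a l [N HN]].
  - exists O. intros y [].
  - destruct (archimed a) as [A1 _].
    exists (Nat.max N (Z.to_nat (up a))). intros y [<-|Hy].
    + apply Rle_trans with (INR (Z.to_nat (up a))).
      * destruct (Z_le_gt_dec 0 (up a)).
        -- rewrite INR_IZR_INZ, Z2Nat.id; [lra|lia].
        -- assert (IZR (up a) <= 0) by (apply IZR_le; lia).
           assert (0 <= INR (Z.to_nat (up a))) by apply pos_INR. lra.
      * apply le_INR. lia.
    + apply Rle_trans with (INR N); auto. apply le_INR. lia.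
Qed.

Lemma IZR_small k : -1 < IZR k < 1 -> k = 0%Z.
Proof.
  intros [H1 H2]. apply lt_IZR in H2. 
  assert (IZR (-1) < IZR k) by lra.
  apply lt_IZR in H. lia.
Qed.

Lemma avoid x t0 w : 0 < w <= 1/4 -> exists t, t0 <= t <= t0 + w /\
  forall n j : Z, rN (w/4) (Z.abs_nat n) <= Rabs (t - IZR n * x - IZR j).
Proof.
  intros Hw. set (c := w / 4). assert (Hc : 0 < c) by (unfold c; lra).
  apply NNPP; intro Hn.
  assert (H : forall t, t0 <= t <= t0 + w -> exists n j : Z,
             Rabs (t - IZR n * x - IZR j) < rN c (Z.abs_nat n)).
  { intros t Ht. apply NNPP; intro H1. apply Hn. exists t. split; auto.
    intros n j. destruct (Rle_lt_dec (rN c (Z.abs_nat n)) (Rabs (t - IZR n * x - IZR j))) as [h|h];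
      auto. exfalso. apply H1. eauto. }
  set (P := fun y z => exists M : nat, y = INR M /\ exists n j : Z, (Z.abs_nat n <= M)%nat /\
             Rabs (z - IZR n * x - IZR j) < rN c (Z.abs_nat n)).
  assert (Hcf : forall y, (exists z, P y z) -> (fun y => exists M : nat, y = INR M) y).
  { intros y [z [M [E _]]]. exists M; auto. }
  set (fam := mkfamily (fun y => exists M : nat, y = INR M) P Hcf).
  assert (Hcov : covering_open_set (fun z => t0 <= z <= t0 + w) fam).
  { split.
    - intros z Hz. destruct (H z Hz) as [n [j Hnj]].
      exists (INR (Z.abs_nat n)). simpl. exists (Z.abs_nat n). split; auto.
      exists n, j. split; auto.
    - intros y z [M [E [n [j [Hn' Hz]]]]].
      assert (Hd : 0 < rN c (Z.abs_nat n) - Rabs (z - IZR n * x - IZR j)) by lra.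
      exists (mkposreal _ Hd). intros z' Hz'. unfold disc in Hz'. simpl in Hz'.
      exists M. split; auto. exists n, j. split; auto.
      replace (z' - IZR n * x - IZR j) with ((z' - z) + (z - IZR n * x - IZR j)) by ring.
      eapply Rle_lt_trans; [apply Rabs_triang|]. lra. }
  destruct (compact_P3 t0 (t0 + w) fam Hcov) as [D [Hcov' [l Hl]]].
  destruct (list_bound l) as [N HN].
  set (s := t0 - 1/4).
  assert (Hb : forall y, t0 <= y <= t0 + w -> exists p, In p (balls x s c N) /\ Rabs (y - fst p) < snd p).
  { intros y Hy. destruct (Hcov' y Hy) as [y' [[M [E [n [j [HnM Hyn]]]]] Dy']].
    assert (Iy : In y' l) by (apply Hl; split; [exists M; auto | auto]).
    assert (HMN : (M <= N)%nat) by (apply INR_le; rewrite <- E; auto).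
    exists (ctr x s n, rN c (Z.abs_nat n)). split; [apply balls_in; lia|]. simpl.
    assert (Hr : rN c (Z.abs_nat n) <= c / 2) by (apply rN_le; lra).
    destruct (Int_part_bounds (IZR n * x - s)) as [I1 I2].
    apply Rabs_def2 in Hyn. destruct Hyn as [Y1 Y2].
    assert (K : (j + Int_part (IZR n * x - s))%Z = 0%Z).
    { apply IZR_small. rewrite plus_IZR. unfold c, s in *. split; lra. }
    assert (E2 : IZR j = - IZR (Int_part (IZR n * x - s))).
    { rewrite <- opp_IZR. f_equal. lia. }
    unfold ctr. replace (y - (IZR n * x - IZR (Int_part (IZR n * x - s)))) with (y - IZR n * x - IZR j) by (rewrite E2; ring). apply Rabs_def1; lra. }
  assert (Hpos : forall p, In p (balls x s c N) -> 0 <= snd p).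
  { clear -Hc. induction N; simpl; intros p Hp.
    - destruct Hp as [<-|[]]. simpl. left; apply rN_pos; auto.
    - destruct Hp as [<-|[<-|Hp]]; simpl; try (left; apply rN_pos; auto). auto. }
  assert (Hlen := cover_len (length (balls x s c N)) (balls x s c N) (le_n _) t0 (t0 + w)
                   ltac:(lra) Hpos Hb).
  rewrite balls_sum in Hlen.
  assert (0 < 4 * c / (INR N + 2)).
  { assert (0 <= INR N) by apply pos_INR. apply Rdiv_lt_0_compat; lra. }
  unfold c in *. lra.
Qed.

Theorem proposition1 (alpha : R)
  (halg : is_algebraic (alpha / (2 * PI)))
  (hirr : is_irrational (alpha / (2 * PI))) :
  forall phi delta : R, 0 <= phi < 2 * PI -> 0 < delta ->
  exists phi' : R, Rabs (phi' - phi) < delta /\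
    exists c : R, exists eps0 : R, 0 < eps0 /\
      forall eps : R, 0 < eps < eps0 ->
        exists k : nat, is_gate_complexity alpha eps phi' k /\
          ln (INR k) > (1 / 3) * ln (1 / eps) + c.
Proof.
  intros phi delta Hphi Hdelta.
  pose proof PI_gt3 as HP.
  set (x := alpha / (2 * PI)) in *.
  assert (Ha : alpha = 2 * PI * x) by (unfold x; field; lra).
  set (t0 := phi / (2 * PI)).
  assert (Ht0 : phi = 2 * PI * t0) by (unfold t0; field; lra).
  set (w := Rmin (delta / (4 * PI)) (1/4)).
  assert (Hw1 : w <= delta / (4 * PI)) by apply Rmin_l.
  assert (Hw2 : w <= 1/4) by apply Rmin_r.
  assert (Hw0 : 0 < w).
  { unfold w, Rmin. destruct (Rle_dec _ _); [apply Rdiv_lt_0_compat|]; lra. }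
  destruct (avoid x t0 w (conj Hw0 Hw2)) as [t [Ht Hav]].
  exists (2 * PI * t). split.
  { rewrite Ht0. replace (2 * PI * t - 2 * PI * t0) with (2 * PI * (t - t0)) by ring.
    rewrite Rabs_pos_eq by nra.
    assert (E : 2 * PI * (delta / (4 * PI)) = delta / 2) by (field; lra).
    assert (2 * PI * (t - t0) <= 2 * PI * (delta / (4 * PI))) by (apply Rmult_le_compat_l; lra).
    lra. }
  set (c := w / 4) in *.
  assert (Hc : 0 < c) by (unfold c; lra).
  exists ((1/2) * ln (c / 6)), (Rmin 1 (c / 2)). split.
  { unfold Rmin. destruct (Rle_dec _ _); lra. }
  intros eps [He0 He1].
  assert (He2 : eps < 1) by (eapply Rlt_le_trans; [exact He1| apply Rmin_l]).
  assert (He3 : eps < c / 2) by (eapply Rlt_le_trans; [exact He1| apply Rmin_r]).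
  set (Pk := fun k : nat => exists n : Z, Z.abs_nat n = k /\ unit_dist (2 * PI * t) (IZR n * alpha) < eps).
  assert (Hex : exists k, Pk k).
  { destruct (density x hirr t (eps / (2 * PI))) as [n [j Hnj]].
    { apply Rdiv_lt_0_compat; lra. }
    exists (Z.abs_nat n), n. split; auto.
    rewrite <- (ud_shift _ _ j).
    assert (E : 2 * PI * t - (IZR n * alpha + 2 * IZR j * PI) = 2 * PI * (t - IZR n * x - IZR j))
      by (rewrite Ha; ring).
    assert (Hb : Rabs (2 * PI * t - (IZR n * alpha + 2 * IZR j * PI)) < eps).
    { rewrite E, Rabs_mult, (Rabs_pos_eq (2 * PI)) by lra.
      assert (E2 : 2 * PI * (eps / (2 * PI)) = eps) by (field; lra).
      assert (2 * PI * Rabs (t - IZR n * x - IZR j) < 2 * PI * (eps / (2 * PI)))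
        by (apply Rmult_lt_compat_l; lra).
      lra. }
    eapply Rle_lt_trans; [apply ud_upper|exact Hb].
    apply Rabs_def2 in Hb. lra. }
  destruct (dec_inh_nat_subset_has_unique_least_element Pk (fun n => classic (Pk n)) Hex)
    as [k [[Pkk Hmin] _]].
  exists k. split.
  { split.
    - exact Pkk.
    - intros n Hn. apply Hmin. exists n. auto. }
  destruct Pkk as [n0 [Hk Hd]].
  set (rho := rN c k).
  assert (Hrho0 : 0 < rho) by (apply rN_pos; auto).
  assert (Hrho1 : rho <= c / 2) by (apply rN_le; lra).
  assert (Hlow : rho <= unit_dist (2 * PI * t) (IZR n0 * alpha)).
  { rewrite unit_dist_eq. rewrite <- (sqrt_pow2 rho) by lra. apply sqrt_le_1_alt.
    apply ud_lower; [unfold c in *; lra|].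
    intro j. specialize (Hav n0 j). rewrite Hk in Hav. fold c rho in Hav.
    replace (2 * PI * t - IZR n0 * alpha - 2 * IZR j * PI) with (2 * PI * (t - IZR n0 * x - IZR j))
      by (rewrite Ha; ring).
    rewrite Rabs_mult, (Rabs_pos_eq (2 * PI)) by lra.
    apply Rle_ge. apply Rmult_le_compat_l; lra. }
  assert (Hlt : rho < eps) by lra.
  destruct k as [|k'].
  { exfalso. unfold rho, rN in Hlt. simpl in Hlt. lra. }
  set (K := INR (S k')) in *.
  assert (HK : 1 <= K) by (unfold K; rewrite S_INR; pose proof (pos_INR k'); lra).
  assert (H6 : c < 6 * eps * K ^ 2).
  { unfold rho, rN in Hlt. fold K in Hlt.
    assert (Hpp : 0 < (K + 1) * (K + 2)) by nra.
    assert (c < eps * ((K + 1) * (K + 2))).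
    { apply Rmult_lt_reg_r with (/ ((K + 1) * (K + 2))). 
      - apply Rinv_0_lt_compat; auto.
      - rewrite Rmult_assoc, Rinv_r by lra. rewrite Rmult_1_r. exact Hlt. }
    nra. }
  assert (Hq : (c / 6) * (1 / eps) < K ^ 2).
  { apply Rmult_lt_reg_r with (6 * eps); [lra|].
    replace (c / 6 * (1 / eps) * (6 * eps)) with c by (field; lra). lra. }
  assert (Hln : ln ((c / 6) * (1 / eps)) < ln (K ^ 2)).
  { apply ln_increasing; auto. apply Rmult_lt_0_compat; [lra|]. apply Rdiv_lt_0_compat; lra. }
  rewrite ln_mult in Hln by (try apply Rdiv_lt_0_compat; lra).
  rewrite ln_pow in Hln by lra. simpl INR in Hln.
  assert (HL : 0 < ln (1 / eps)).
  { rewrite <- ln_1. apply ln_increasing; [lra|].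
    apply Rmult_lt_reg_r with eps; [lra|]. replace (1 / eps * eps) with 1 by (field; lra). lra. }
  lra.
Qed.
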